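(* Consider an episodic process with $K$ episodes, horizon $H$, finite state space $\mathcal S$ ($|\mathcal S|=S$) and finite action sets $\mathcal A,\mathcal B$ ($|\mathcal A|=A$, $|\mathcal B|=B$), with $T=KH$ and $S,A,B,T\ge 2$. In episode $k$ and step $h$ a triple $(s_h^k,a_h^k,b_h^k)\in\mathcal S\times\mathcal A\times\mathcal B$ is realized and then $s_{h+1}^k$ is drawn from $P_h(\cdot\mid s_h^k,a_h^k,b_h^k)$, conditionally independently of the past given $(s_h^k,a_h^k,b_h^k)$. Let $\mathcal F_{k,h}$ denote the $\sigma$-field generated by everything observed before $s_{h+1}^k$ is drawn (all of episodes $1,\dots,k-1$, and in episode $k$ the states $s_1^k,\dots,s_h^k$ and actions up to and including step $h$). Let $P_h^k\in\{0,1\}^{1\times S}$ be the indicator row vector of $s_{h+1}^k$, and $P_{h,s,a,b}=P_h(\cdot\mid s,a,b)\in\mathbb R^{1\times S}$. For $(s,a,b)$, let $N_h^k(s,a,b)$ be the number of episodes $k'\le k$ with $(s_h^{k'},a_h^{k'},b_h^{k'})=(s,a,b)$, and $k_h^n(s,a,b)$ the index of the episode of the $n$-th such visit. Suppose $\{F_{h+1}^k\in\mathbb R^S\}$ and $\{G_h^k(s,a,b,N)\in\mathbb R\}$ (for $k\in[K]$, $h\in[H]$, $(s,a,b)$, $N\in[K]$) satisfy: $F_{h+1}^k$ and $G_h^k(s,a,b,N)$ are $\mathcal F_{k,h}$-measurable; $\|F_{h+1}^k\|_\infty\le C_{\mathrm f}$; $0\le G_h^k(s,a,b,N)\le C_{\mathrm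 g}$; and $0\le \sum_{n=1}^{N_h^k(s,a,b)}G_h^{k_h^n(s,a,b)}(s,a,b,N)\le 2$ for all $k,h,s,a,b,N$, where $C_{\mathrm f},C_{\mathrm g}>0$ are deterministic constants. Define $$X_i(s,a,b,h,N)=G_h^i(s,a,b,N)\,(P_h^i-P_{h,s,a,b})F_{h+1}^i\,\mathbb 1\{(s_h^i,a_h^i,b_h^i)=(s,a,b)\}.$$ Then there is a universal constant $C>0$ such that for any $\delta\in(0,1)$, with probability at least $1-\delta$, simultaneously for all $(k,h,s,a,b,N)\in[K]\times[H]\times\mathcal S\times\mathcal A\times\mathcal B\times[K]$, $$\Big|\sum_{i=1}^kX_i(s,a,b,h,N)\Big|\le C\Bigg[\sqrt{C_{\mathrm g}\log^2\tfrac{SABT}{\delta}}\sqrt{\sum_{n=1}^{N_h^k(s,a,b)}G_h^{k_h^n(s,a,b)}(s,a,b,N)\,\mathsf{Var}_{h,s,a,b}\big(F_{h+1}^{k_h^n(s,a,b)}\big)}+\Big(C_{\mathrm g}C_{\mathrm f}+\sqrt{\tfrac{C_{\mathrm g}}{N}}C_{\mathrm f}\Big)\log^2\tfrac{SABT}{\delta}\Bigg].$$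
   Context: For $V\in\mathbb R^S$, $\mathsf{Var}_{h,s,a,b}(V)=P_{h,s,a,b}(V^2)-(P_{h,s,a,b}V)^2$, where $V^2$ is the entrywise square. $[K]=\{1,\dots,K\}$. *)

(* Defs.v *)
From HB Require Import structures.
From mathcomp Require Import all_boot all_order all_algebra.
From mathcomp Require Import reals exp Rstruct.
Set Implicit Arguments. Unset Strict Implicit. Unset Printing Implicit Defensive.
Import Order.TTheory GRing.Theory Num.Theory.
Local Open Scope ring_scope.

Notation RR := Rdefinitions.R.

Section Defs.
Variables (K H : nat) (St Ac Bc : finType).

(* A full outcome of the K-episode process: for each episode k (0-based),
   the states s_1..s_{H+1} (indices 0..H) and the action pairs (a_h,b_h), h=1..H
   (indices 0..H-1). *)
Definition traj := {ffun 'I_K -> {ffun 'I_H.+1 -> St} * {ffun 'I_H -> Ac * Bc}}.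

Definition st_at (w : traj) (k : 'I_K) (h : 'I_H) : St := (w k).1 (widen_ord (leqnSn H) h).
Definition a_at (w : traj) (k : 'I_K) (h : 'I_H) : Ac := ((w k).2 h).1.
Definition b_at (w : traj) (k : 'I_K) (h : 'I_H) : Bc := ((w k).2 h).2.
Definition nxt (w : traj) (k : 'I_K) (h : 'I_H) : St := (w k).1 (lift ord0 h).

(* w and w' coincide on everything observed before s_{h+1}^k is drawn:
   the atoms of the sigma-field F_{k,h}. *)
Definition agreeF (k : 'I_K) (h : 'I_H) (w w' : traj) : bool :=
  [&& [forall k' : 'I_K, (k' < k)%N ==> (w k' == w' k')],
      [forall j : 'I_H.+1, (j <= h)%N ==> ((w k).1 j == (w' k).1 j)] &
      [forall h' : 'I_H, (h' <= h)%N ==> ((w k).2 h' == (w' k).2 h')]].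

Definition visit (w : traj) (k : 'I_K) (h : 'I_H) (s : St) (a : Ac) (b : Bc) : bool :=
  [&& st_at w k h == s, a_at w k h == a & b_at w k h == b].

Variable P : 'I_H -> St -> Ac -> Bc -> St -> RR.

Definition PV (h : 'I_H) s a b (V : St -> RR) : RR := \sum_(s' : St) P h s a b s' * V s'.
Definition Var (h : 'I_H) s a b (V : St -> RR) : RR :=
  PV h s a b (fun x => V x ^+ 2) - (PV h s a b V) ^+ 2.

Variables (F : 'I_K -> 'I_H -> traj -> St -> RR)
          (G : 'I_K -> 'I_H -> St -> Ac -> Bc -> nat -> traj -> RR).

(* sum_{n=1}^{N_h^k(s,a,b)} G_h^{k_h^n}(s,a,b,N): sum over the visiting episodes i <= k *)
Definition Gsum (w : traj) (k : 'I_K) (h : 'I_H) s a b (N : nat) : RR :=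
  \sum_(i : 'I_K | (i <= k)%N && visit w i h s a b) G i h s a b N w.

Definition GVarsum (w : traj) (k : 'I_K) (h : 'I_H) s a b (N : nat) : RR :=
  \sum_(i : 'I_K | (i <= k)%N && visit w i h s a b)
     G i h s a b N w * Var h s a b (F i h w).

Definition Xi (w : traj) (i : 'I_K) (h : 'I_H) s a b (N : nat) : RR :=
  G i h s a b N w * (F i h w (nxt w i h) - PV h s a b (F i h w)) * (visit w i h s a b)%:R.

Definition Xsum (w : traj) (k : 'I_K) (h : 'I_H) s a b (N : nat) : RR :=
  \sum_(i : 'I_K | (i <= k)%N) Xi w i h s a b N.

(* the good event of the theorem, for constant C, bounds Cf Cg and confidence delta;
   N ranges over [K] as N'.+1 with N' : 'I_K *)
Definition good (C Cf Cg delta : RR) (w : traj) : bool :=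
  let L := ln ((#|St| * #|Ac| * #|Bc| * (K * H))%:R / delta) in
  [forall k : 'I_K, forall h : 'I_H, forall s : St, forall a : Ac, forall b : Bc,
   forall N' : 'I_K,
     `|Xsum w k h s a b N'.+1|
       <= C * (Num.sqrt (Cg * L ^+ 2) * Num.sqrt (GVarsum w k h s a b N'.+1)
               + (Cg * Cf + Num.sqrt (Cg / (N'.+1)%:R) * Cf) * L ^+ 2)].

End Defs.

(* Main.v *)
Require Import Defs.
From HB Require Import structures.
From mathcomp Require Import all_boot all_order all_algebra.
From mathcomp Require Import reals exp Rstruct.
From mathcomp Require Import sequences ring lra zify.
From mathcomp Require Import boolp.
Import Order.TTheory GRing.Theory Num.Theory.
Local Open Scope ring_scope.

Lemma exp_quad (x : RR) : -(1/2) <= x -> x <= 1/2 -> expR x <= 1 + x + 2 * x ^+ 2.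
Proof.
move=> h1 h2.
have h := expR_ge1Dx (- x).
rewrite expRN in h.
have E0 := expR_gt0 x.
have hE : expR x * (1 - x) <= 1.
  have := ler_wpM2l (ltW E0) h.
  by rewrite mulfV ?(lt0r_neq0 E0) // addrC.
set E := expR x in hE E0 *.
nra.
Qed.

Definition lam (Cg Cf : RR) (j : nat) : RR := (4 * Cg * Cf * 2 ^+ j)^-1.

Lemma lam_gt0 Cg Cf j : 0 < Cg -> 0 < Cf -> 0 < lam Cg Cf j.
Proof. by move=> ? ?; rewrite /lam invr_gt0 !mulr_gt0 // exprn_gt0. Qed.

Lemma lamS Cg Cf j : lam Cg Cf j.+1 * 2 = lam Cg Cf j.
Proof.
rewrite /lam exprS mulrCA invfM mulrAC mulVf ?mul1r //.
by rewrite pnatr_eq0.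
Qed.

Lemma lam_mul Cg Cf j : 0 < Cg -> 0 < Cf -> lam Cg Cf j * (4 * Cg * Cf * 2 ^+ j) = 1.
Proof. move=> ? ?; rewrite /lam mulVf // gt_eqF // !mulr_gt0 // exprn_gt0 //. Qed.

Lemma sq_le_sqrt (a b : RR) : 0 <= a -> a ^+ 2 <= b -> a <= Num.sqrt b.
Proof.
move=> a0 ab.
have -> : a = Num.sqrt (a ^+ 2) by rewrite sqrtr_sqr ger0_norm.
exact: ler_wsqrtr.
Qed.

Lemma two_case (Sx l q ell : RR) : 0 < l -> 0 <= q -> 0 <= ell ->
  l ^+ 2 * q <= ell -> ell <= 4 * (l ^+ 2 * q) ->
  Sx <= l * q + ell / l -> Sx <= Num.sqrt (10 * ell * q).
Proof.
move=> l0 q0 e0 h1 h2 hS.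
set y := ell / l in hS.
have yl : y * l = ell by rewrite /y mulfVK // gt_eqF.
have y0 : 0 <= y by rewrite /y divr_ge0 // ltW.
have hy : y ^+ 2 <= 4 * q * ell.
  have : (y ^+ 2) * l ^+ 2 <= (4 * q * ell) * l ^+ 2.
    rewrite -exprMn yl expr2; nra.
  by rewrite ler_pM2r // exprn_gt0.
have hx : (l * q) ^+ 2 <= ell * q.
  rewrite exprMn; nra.
apply: (le_trans hS); apply: sq_le_sqrt.
  by rewrite addr_ge0 // mulr_ge0 // ltW.
set x := l * q in hx *.
nra.
Qed.

Lemma det_bound (Cg Cf ell Sx q : RR) (K : nat) : 0 < Cg -> 0 < Cf -> 0 <= q ->
  q <= 2 * K%:R * Cg ^+ 2 * Cf ^+ 2 -> 1/8 <= ell ->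
  (forall j : nat, (j <= K)%N -> Sx <= lam Cg Cf j * q + ell / lam Cg Cf j) ->
  Sx <= 8 * ell * Cg * Cf + Num.sqrt (10 * ell * q).
Proof.
move=> Cg0 Cf0 q0 qle e8 hj.
have e0 : 0 <= ell by lra.
have sq0 := sqrtr_ge0 (10 * ell * q).
have claim : forall j, (j <= K)%N -> lam Cg Cf j ^+ 2 * q <= ell ->
    Sx <= 8 * ell * Cg * Cf + Num.sqrt (10 * ell * q).
  elim=> [|j IH] jK hl.
    have l0 := lam_gt0 _ _ 0 Cg0 Cf0.
    have lm := lam_mul _ _ 0 Cg0 Cf0.
    rewrite expr0 mulr1 in lm.
    have hS := hj 0%N jK.
    set l := lam Cg Cf 0 in hS hl lm l0.
    have eq1 : ell / l = 4 * Cg * Cf * ell.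
      have il : l^-1 = 4 * Cg * Cf.
        by rewrite -(mulKf (lt0r_neq0 l0) (4 * Cg * Cf)) lm mulr1.
      by rewrite il mulrC.
    have : l * q <= ell / l.
      rewrite ler_pdivlMr // mulrAC -expr2 //.
    rewrite eq1 => h.
    lra.
  case: (lerP (lam Cg Cf j ^+ 2 * q) ell) => hlj.
    by apply: IH => //; apply: ltnW.
  have h4 : ell <= 4 * (lam Cg Cf j.+1 ^+ 2 * q).
    rewrite -lamS exprMn in hlj; apply: ltW; move: hlj; rewrite (_ : (2:RR) ^+ 2 = 4); last by rewrite expr2; lra.
    by rewrite mulrAC mulrC.
  have := @two_case Sx _ q ell (lam_gt0 _ _ j.+1 Cg0 Cf0) q0 e0 hl h4 (hj _ jK).
  have : 0 <= 8 * ell * Cg * Cf by rewrite !mulr_ge0 // ltW.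
  lra.
apply: (claim K (leqnn K)).
have lm := lam_mul _ _ K Cg0 Cf0.
have l0 := lam_gt0 _ _ K Cg0 Cf0.
set l := lam Cg Cf K in lm l0 *.
have Kt : (K%:R : RR) <= (2 ^+ K) ^+ 2.
  rewrite -natrX -natrX ler_nat expnS expn1.
  apply: (leq_trans (ltnW (ltn_expl K (isT : 1 < 2)%N))).
  by rewrite leq_pmulr // expn_gt0.
set t := (2:RR) ^+ K in lm Kt.
have ltc : l * t * Cg * Cf = 1 / 4.
  have h4 : 4 * (l * t * Cg * Cf) = l * (4 * Cg * Cf * t) by ring.
  rewrite lm in h4.
  set X := l * t * Cg * Cf in h4 *; lra.
have : l ^+ 2 * q <= l ^+ 2 * (2 * t ^+ 2 * Cg ^+ 2 * Cf ^+ 2).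
  rewrite ler_wpM2l ?sqr_ge0 //; apply: (le_trans qle).
  rewrite ler_wpM2r ?sqr_ge0 // ler_wpM2r ?sqr_ge0 // ler_wpM2l //; lra.
have -> : l ^+ 2 * (2 * t ^+ 2 * Cg ^+ 2 * Cf ^+ 2) = 2 * (l * t * Cg * Cf) ^+ 2 by ring.
rewrite ltc; lra.
Qed.

Set Implicit Arguments. Unset Strict Implicit. Unset Printing Implicit Defensive.

Section Tower.
Variables (K H : nat) (St Ac Bc : finType).
Local Notation T := (traj K H St Ac Bc).

Lemma agreeFP (k : 'I_K) (h : 'I_H) (w w' : T) :
  reflect [/\ forall k' : 'I_K, (k' < k)%N -> w k' = w' k',
              forall j : 'I_H.+1, (j <= h)%N -> (w k).1 j = (w' k).1 j &
              forall h' : 'I_H, (h' <= h)%N -> (w k).2 h' = (w' k).2 h']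
          (agreeF k h w w').
Proof.
apply: (iffP and3P) => [[/forallP h1 /forallP h2 /forallP h3]|[h1 h2 h3]].
  split=> [k' lt|j le|h' le].
  - by apply/eqP; move/implyP: (h1 k'); apply.
  - by apply/eqP; move/implyP: (h2 j); apply.
  - by apply/eqP; move/implyP: (h3 h'); apply.
split; apply/forallP.
- by move=> k'; apply/implyP => lt; apply/eqP; apply: h1.
- by move=> j; apply/implyP => lt; apply/eqP; apply: h2.
- by move=> j; apply/implyP => lt; apply/eqP; apply: h3.
Qed.

Lemma agreeF_refl k h (w : T) : agreeF k h w w.
Proof. by apply/agreeFP. Qed.

Lemma agreeF_sym k h (w w' : T) : agreeF k h w w' -> agreeF k h w' w.
Proof.
by move/agreeFP => [h1 h2 h3]; apply/agreeFP; split=> *; [rewrite h1|rewrite h2|rewrite h3].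
Qed.

Lemma agreeF_trans k h (w1 w2 w3 : T) :
  agreeF k h w1 w2 -> agreeF k h w2 w3 -> agreeF k h w1 w3.
Proof.
move/agreeFP => [h1 h2 h3] /agreeFP [g1 g2 g3]; apply/agreeFP.
by split=> *; [rewrite h1 ?g1|rewrite h2 ?g2|rewrite h3 ?g3].
Qed.

Lemma agreeF_st k h (w w' : T) : agreeF k h w w' ->
  [/\ st_at w k h = st_at w' k h, a_at w k h = a_at w' k h & b_at w k h = b_at w' k h].
Proof.
move/agreeFP => [_ h2 h3].
by rewrite /st_at /a_at /b_at h2 ?h3.
Qed.

Lemma agreeF_visit k h (w w' : T) s a b : agreeF k h w w' ->
  visit w k h s a b = visit w' k h s a b.
Proof. by move/agreeF_st => [e1 e2 e3]; rewrite /visit e1 e2 e3. Qed.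

Lemma agreeF_lt k h (w w' : T) (i : 'I_K) : agreeF k h w w' -> (i < k)%N -> w i = w' i.
Proof. by move/agreeFP => [h1 _ _]; apply: h1. Qed.

Lemma agreeF_of_eq (i : 'I_K) h (w w' : T) :
  (forall k' : 'I_K, (k' <= i)%N -> w k' = w' k') -> agreeF i h w w'.
Proof.
move=> E; apply/agreeFP; split=> [k' lt|j _|h' _].
- by apply: E; apply: ltnW.
- by rewrite E.
- by rewrite E.
Qed.

Definition ncl k h (w : T) : nat := #|[pred w' | agreeF k h w w']|.

Lemma ncl_eq k h (w w' : T) : agreeF k h w w' -> ncl k h w = ncl k h w'.
Proof.
move=> E; apply: eq_card => x /=; apply/idP/idP => H1.
- exact: agreeF_trans (agreeF_sym E) H1.
- exact: agreeF_trans E H1.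
Qed.

Lemma ncl_gt0 k h (w : T) : (0 < ncl k h w)%N.
Proof. by apply/card_gt0P; exists w; rewrite inE /= agreeF_refl. Qed.

Lemma regroup k h (r psi : T -> RR) :
  (forall w w', agreeF k h w w' -> psi w = psi w') ->
  \sum_w (\sum_(w' | agreeF k h w w') r w') * psi w / (ncl k h w)%:R
  = \sum_w r w * psi w.
Proof.
move=> Hpsi.
under eq_bigr => w _ do rewrite !mulr_suml big_mkcond /=.
rewrite exchange_big /=; apply: eq_bigr => w' _.
transitivity (\sum_(w | agreeF k h w' w) r w' * psi w' / (ncl k h w')%:R).
  rewrite [RHS]big_mkcond /=; apply: eq_bigr => w _.
  case E: (agreeF k h w w').
    by rewrite (agreeF_sym E) (Hpsi _ _ E) (ncl_eq E).
  case E2: (agreeF k h w' w) => //.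
  by rewrite (agreeF_sym E2) in E.
rewrite sumr_const.
have -> : #|[pred w | agreeF k h w' w]| = ncl k h w' by [].
rewrite -[_ *+ ncl k h w']mulr_natr mulfVK // pnatr_eq0 -lt0n; exact: ncl_gt0.
Qed.

Variable P : 'I_H -> St -> Ac -> Bc -> St -> RR.
Variable p : T -> RR.
Hypothesis markov : forall (k : 'I_K) (h : 'I_H) (w : T) (s' : St),
       \sum_(w' | agreeF k h w w' && (nxt w' k h == s')) p w'
       = P h (st_at w k h) (a_at w k h) (b_at w k h) s'
         * \sum_(w' | agreeF k h w w') p w'.

Definition Pw k h (w : T) s' := P h (st_at w k h) (a_at w k h) (b_at w k h) s'.

Lemma onestep k h s' (psi : T -> RR) :
  (forall w w', agreeF k h w w' -> psi w = psi w') ->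
  \sum_w (p w * (nxt w k h == s')%:R) * psi w = \sum_w p w * (Pw k h w s' * psi w).
Proof.
move=> Hpsi.
rewrite -(regroup _ Hpsi).
have Hpsi2 : forall w w', agreeF k h w w' -> Pw k h w s' * psi w = Pw k h w' s' * psi w'.
  move=> w w' E; rewrite (Hpsi _ _ E) /Pw.
  by case: (agreeF_st E) => -> -> ->.
rewrite -(regroup _ Hpsi2); apply: eq_bigr => w _.
have -> : \sum_(w' | agreeF k h w w') p w' * (nxt w' k h == s')%:R
   = \sum_(w' | agreeF k h w w' && (nxt w' k h == s')) p w'.
  rewrite [RHS]big_mkcondr /=; apply: eq_bigr => w' _.
  by case: (nxt w' k h == s'); rewrite ?mulr1 ?mulr0.
rewrite markov /Pw; ring.
Qed.

Lemma tower k h (g : T -> RR) (phi : T -> St -> RR) :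
  (forall w w', agreeF k h w w' -> g w = g w') ->
  (forall w w' s', agreeF k h w w' -> phi w s' = phi w' s') ->
  \sum_w p w * (g w * phi w (nxt w k h))
  = \sum_w p w * (g w * \sum_s' Pw k h w s' * phi w s').
Proof.
move=> Hg Hphi.
have E1 : forall w, p w * (g w * phi w (nxt w k h))
   = \sum_s' (p w * (nxt w k h == s')%:R) * (g w * phi w s').
  move=> w; rewrite (bigD1 (nxt w k h)) //= eqxx mulr1 big1 ?addr0 // => s' ne.
  by rewrite eq_sym (negbTE ne) mulr0 mul0r.
under eq_bigr => w _ do rewrite E1.
rewrite exchange_big /=.
transitivity (\sum_s' \sum_w p w * (Pw k h w s' * (g w * phi w s'))).
  apply: eq_bigr => s' _; apply: onestep => w w' E.
  by rewrite (Hg _ _ E) (Hphi _ _ _ E).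
rewrite exchange_big /=; apply: eq_bigr => w _.
rewrite mulr_sumr mulr_sumr; apply: eq_bigr => s' _; ring.
Qed.

End Tower.

Lemma absx (lam g d Cg Cf : RR) : 0 <= lam -> 0 <= g -> g <= Cg -> `|d| <= 2 * Cf ->
  lam * (4 * Cg * Cf) <= 1 -> -(1/2) <= lam * g * d /\ lam * g * d <= 1/2.
Proof.
move=> l0 g0 gC dC hl.
have h1 : lam * g <= lam * Cg by rewrite ler_wpM2l.
have : `|lam * g * d| <= lam * Cg * (2 * Cf).
  rewrite normrM ger0_norm ?mulr_ge0 //; apply: ler_pM => //; by rewrite mulr_ge0.
move/ler_normlP => [h2 h3].
lra.
Qed.

Section Step.
Variables (H : nat) (St Ac Bc : finType).
Variable P : 'I_H -> St -> Ac -> Bc -> St -> RR.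
Hypothesis P0 : forall h s a b s', 0 <= P h s a b s'.
Hypothesis P1 : forall h s a b, \sum_(s' : St) P h s a b s' = 1.

Lemma Var_alt h s a b (f : St -> RR) :
  Var P h s a b f = \sum_s' P h s a b s' * (f s' - PV P h s a b f) ^+ 2.
Proof.
rewrite /Var; set m := PV P h s a b f.
transitivity (\sum_s' (P h s a b s' * f s' ^+ 2 - 2 * m * (P h s a b s' * f s')
   + m ^+ 2 * P h s a b s')).
  rewrite !big_split /= sumrN -!mulr_sumr P1.
  change (\sum_i P h s a b i * f i) with m; rewrite /PV; ring.
by apply: eq_bigr => s' _; ring.
Qed.

Lemma PV_bound h s a b (f : St -> RR) Cf : (forall s', `|f s'| <= Cf) ->
  `|PV P h s a b f| <= Cf.
Proof.
move=> fC; rewrite /PV; apply: (le_trans (ler_norm_sum _ _ _)).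
have -> : Cf = \sum_s' P h s a b s' * Cf by rewrite -mulr_suml P1 mul1r.
apply: ler_sum => s' _; rewrite normrM ger0_norm //; exact: ler_wpM2l.
Qed.

Lemma Var_ge0 h s a b (f : St -> RR) : 0 <= Var P h s a b f.
Proof. rewrite Var_alt; apply: sumr_ge0 => s' _; exact: mulr_ge0 (sqr_ge0 _). Qed.

Lemma Var_le h s a b (f : St -> RR) Cf : (forall s', `|f s'| <= Cf) ->
  Var P h s a b f <= Cf ^+ 2.
Proof.
move=> fC; rewrite /Var.
have : PV P h s a b (fun x => f x ^+ 2) <= Cf ^+ 2.
  rewrite /PV; have -> : Cf ^+ 2 = \sum_s' P h s a b s' * Cf ^+ 2 by rewrite -mulr_suml P1 mul1r.
  apply: ler_sum => s' _; apply: ler_wpM2l => //.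
  have /ler_normlP [u1 u2] := fC s'; nra.
have := sqr_ge0 (PV P h s a b f); lra.
Qed.

Lemma step_bound h s a b (f : St -> RR) (g lam sig Cg Cf : RR) :
  (forall s', `|f s'| <= Cf) -> 0 <= g -> g <= Cg -> 0 <= lam ->
  lam * (4 * Cg * Cf) <= 1 -> (sig = 1 \/ sig = -1) ->
  \sum_s' P h s a b s' * expR (lam * sig * (g * (f s' - PV P h s a b f))
        - 2 * lam ^+ 2 * (g ^+ 2 * Var P h s a b f)) <= 1.
Proof.
move=> fC g0 gC l0 hl hsig.
have hm := PV_bound h s a b fC.
set m := PV P h s a b f in hm *.
set c := 2 * lam ^+ 2 * (g ^+ 2 * Var P h s a b f).
have c0 : 0 <= c by rewrite !mulr_ge0 ?sqr_ge0 ?Var_ge0.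
have sig2 : sig ^+ 2 = 1 by case: hsig => ->; rewrite ?expr1n ?sqrrN ?expr1n.
have key : forall s', expR (lam * sig * (g * (f s' - m)) - c) <=
   (1 + lam * sig * (g * (f s' - m)) + 2 * (lam * sig * (g * (f s' - m))) ^+ 2) * expR (- c).
  move=> s'; rewrite exp.expRD ler_wpM2r ?expR_ge0 //.
  have hd : `|f s' - m| <= 2 * Cf.
    apply: (le_trans (ler_normB _ _)); have := fC s'; lra.
  have [h1 h2] := absx l0 g0 gC hd hl.
  apply: exp_quad.
    by case: hsig => ->; lra.
  by case: hsig => ->; lra.
apply: (le_trans (ler_sum _ (fun s' _ => ler_wpM2l (P0 h s a b s') (key s')))).
set Q := P h s a b.
have S2 : \sum_s' Q s' * (lam * sig * (g * (f s' - m))) = 0.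
  transitivity (\sum_s' ((lam * sig * g) * (Q s' * f s') - (lam * sig * g * m) * Q s')).
    by apply: eq_bigr => s' _; ring.
  rewrite big_split /= sumrN -!mulr_sumr P1.
  change (\sum_i Q i * f i) with m; ring.
have S3 : \sum_s' Q s' * (lam * sig * (g * (f s' - m))) ^+ 2 = lam ^+ 2 * g ^+ 2 * Var P h s a b f.
  rewrite Var_alt -/m mulr_sumr; apply: eq_bigr => s' _.
  rewrite !exprMn sig2 /Q; ring.
rewrite (_ : \sum_s' Q s' * ((1 + lam * sig * (g * (f s' - m)) + 2 * (lam * sig * (g * (f s' - m))) ^+ 2) * expR (- c)) = (\sum_s' (Q s' + Q s' * (lam * sig * (g * (f s' - m)))
     + 2 * (Q s' * (lam * sig * (g * (f s' - m))) ^+ 2))) * expR (- c)); last first.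
  rewrite mulr_suml; apply: eq_bigr => s' _; ring.
rewrite !big_split /= -mulr_sumr P1 S2 S3.
have := expRxMexpNx_1 c.
have := expR_ge1Dx c.
have := expR_gt0 (- c).
rewrite /c; set E1 := expR _; set E2 := expR _.
nra.
Qed.

End Step.

Section Super.
Variables (K H : nat) (St Ac Bc : finType).
Local Notation T := (traj K H St Ac Bc).
Variable P : 'I_H -> St -> Ac -> Bc -> St -> RR.
Hypothesis P0 : forall h s a b s', 0 <= P h s a b s'.
Hypothesis P1 : forall h s a b, \sum_(s' : St) P h s a b s' = 1.
Variable p : T -> RR.
Hypothesis p0 : forall w, 0 <= p w.
Hypothesis psum : \sum_(w : T) p w = 1.
Hypothesis markov : forall (k : 'I_K) (h : 'I_H) (w : T) (s' : St),
       \sum_(w' | agreeF k h w w' && (nxt w' k h == s')) p w'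
       = P h (st_at w k h) (a_at w k h) (b_at w k h) s'
         * \sum_(w' | agreeF k h w w') p w'.
Variables (Cf Cg : RR).
Hypothesis Cf0 : 0 < Cf.
Hypothesis Cg0 : 0 < Cg.
Variables (F : 'I_K -> 'I_H -> T -> St -> RR)
          (G : 'I_K -> 'I_H -> St -> Ac -> Bc -> nat -> T -> RR).
Hypothesis Fmeas : forall k h w w' s', agreeF k h w w' -> F k h w s' = F k h w' s'.
Hypothesis Gmeas : forall k h s a b N w w', agreeF k h w w' -> G k h s a b N w = G k h s a b N w'.
Hypothesis Fb : forall k h w s', `|F k h w s'| <= Cf.
Hypothesis Gb : forall k h s a b N w, (1 <= N <= K)%N -> 0 <= G k h s a b N w <= Cg.

Variables (h : 'I_H) (s : St) (a : Ac) (b : Bc) (N : nat).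
Hypothesis hN : (1 <= N <= K)%N.
Variables (lam sig : RR).
Hypothesis l0 : 0 <= lam.
Hypothesis hl : lam * (4 * Cg * Cf) <= 1.
Hypothesis hsig : sig = 1 \/ sig = -1.

Definition Wt (i : 'I_K) (w : T) :=
  G i h s a b N w ^+ 2 * Var P h s a b (F i h w) * (visit w i h s a b)%:R.
Definition Y (i : 'I_K) (w : T) :=
  lam * sig * Xi P F G w i h s a b N - 2 * lam ^+ 2 * Wt i w.

Lemma F_meas_fun k h' (w w' : T) : agreeF k h' w w' -> F k h' w = F k h' w'.
Proof. by move=> E; apply: funext => s'; apply: Fmeas. Qed.

Lemma Y_meas (i : 'I_K) (w w' : T) : (forall k' : 'I_K, (k' <= i)%N -> w k' = w' k') ->
  Y i w = Y i w'.
Proof.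
move=> E; have A := agreeF_of_eq h E.
rewrite /Y /Wt /Xi (Gmeas s a b N A) (F_meas_fun A) (agreeF_visit _ _ _ A).
by rewrite /nxt (E i (leqnn _)).
Qed.

Lemma super m : \sum_w p w * expR (\sum_(i : 'I_K | (i < m)%N) Y i w) <= 1.
Proof.
elim: m => [|m IH].
  under eq_bigr => w _ do rewrite big_pred0 // exp.expR0 mulr1.
  by rewrite psum.
case: (ltnP m K) => mK; last first.
  apply: le_trans IH; rewrite le_eqVlt; apply/orP; left; apply/eqP.
  apply: eq_bigr => w _; congr (_ * expR _); apply: eq_bigl => i.
  by rewrite (leq_trans (ltn_ord i) mK) (ltn_trans (ltn_ord i)) // (leq_ltn_trans mK).
set i0 := Ordinal mK.
have split : forall w, \sum_(i : 'I_K | (i < m.+1)%N) Y i w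
    = Y i0 w + \sum_(i : 'I_K | (i < m)%N) Y i w.
  move=> w; rewrite (bigD1 i0) //=; congr (_ + _); apply: eq_bigl => i.
  by rewrite ltnS ltn_neqAle andbC.
pose phi := fun (w : T) (s' : St) => expR (lam * sig * (G i0 h s a b N w *
   (F i0 h w s' - PV P h s a b (F i0 h w)) * (visit w i0 h s a b)%:R) - 2 * lam ^+ 2 * Wt i0 w).
pose g := fun w : T => expR (\sum_(i : 'I_K | (i < m)%N) Y i w).
have E1 : forall w, p w * expR (\sum_(i : 'I_K | (i < m.+1)%N) Y i w)
   = p w * (g w * phi w (nxt w i0 h)).
  move=> w; rewrite split exp.expRD [X in p w * X]mulrC. rewrite /g /phi /Y /Xi. reflexivity.
under eq_bigr => w _ do rewrite E1.
rewrite (tower markov); last 2 first.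
- move=> w w' A; rewrite /g; congr expR; apply: eq_bigr => i lt.
  apply: Y_meas => k' le; apply: (agreeF_lt A).
  exact: leq_ltn_trans le lt.
- move=> w w' s' A; rewrite /phi /Wt (Gmeas s a b N A) (F_meas_fun A) (agreeF_visit _ _ _ A).
  by [].
apply: le_trans IH; apply: ler_sum => w _; apply: ler_wpM2l => //.
rewrite -[X in _ <= X]mulr1; apply: ler_wpM2l; first exact: expR_ge0.
rewrite /Pw /phi /Wt.
case V: (visit w i0 h s a b); last first.
  under eq_bigr => s' _ do rewrite /= !mulr0n !mulr0 subr0 exp.expR0 mulr1.
  by rewrite P1.
move: (V); rewrite /visit => /and3P [/eqP -> /eqP -> /eqP ->].
under eq_bigr => s' _ do rewrite /= !mulr1n !mulr1.
have [G0 G1] := andP (Gb i0 h s a b w hN).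
exact: (step_bound P0 P1 h s a b (Fb i0 h w) G0 G1 l0 hl hsig).
Qed.

Lemma Ysum (k : 'I_K) w : \sum_(i : 'I_K | (i < k.+1)%N) Y i w
  = lam * sig * Xsum P F G w k h s a b N - 2 * lam ^+ 2 * \sum_(i : 'I_K | (i <= k)%N) Wt i w.
Proof.
rewrite /Xsum /Y big_split /= sumrN -!mulr_sumr.
by congr (_ * _ - _ * _); apply: eq_bigl => i; rewrite ltnS.
Qed.

Lemma Wsum_le (k : 'I_K) w :
  \sum_(i : 'I_K | (i <= k)%N) Wt i w <= Cg * GVarsum P F G w k h s a b N.
Proof.
rewrite /GVarsum big_mkcondr mulr_sumr /=; apply: ler_sum => i _.
rewrite /Wt; case: (visit w i h s a b) => /=; last by rewrite mulr0n !mulr0.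
have [G0 G1] := andP (Gb i h s a b w hN).
have V0 := Var_ge0 P0 P1 h s a b (F i h w).
rewrite mulr1n mulr1 expr2; have GV0 := mulr_ge0 G0 V0; nra.
Qed.

Lemma GV_ge0 (k : 'I_K) w : 0 <= GVarsum P F G w k h s a b N.
Proof.
apply: sumr_ge0 => i _; have [G0 G1] := andP (Gb i h s a b w hN).
exact: mulr_ge0 G0 (Var_ge0 P0 P1 h s a b _).
Qed.

Lemma GV_le (k : 'I_K) w : GVarsum P F G w k h s a b N <= K%:R * Cg * Cf ^+ 2.
Proof.
apply: (@le_trans _ _ (\sum_(i : 'I_K | (i <= k)%N && visit w i h s a b) Cg * Cf ^+ 2)).
  apply: ler_sum => i _; have [G0 G1] := andP (Gb i h s a b w hN).
  apply: ler_pM => //; first exact: Var_ge0.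
  exact: (Var_le P0 P1 h s a b (Fb i h w)).
rewrite big_mkcond /=.
apply: (@le_trans _ _ (\sum_(i : 'I_K) Cg * Cf ^+ 2)).
  apply: ler_sum => i _; case: ifP => // _; by rewrite mulr_ge0 ?sqr_ge0 // ltW.
by rewrite sumr_const card_ord -[_ *+ K]mulr_natl mulrA.
Qed.

End Super.

Unset Implicit Arguments.

Lemma ln_half (x : RR) : 2 <= x -> 1/2 <= ln x.
Proof.
move=> hx.
have x0 : 0 < x by lra.
have xi0 : 0 < x^-1 by rewrite invr_gt0.
have h := @le_ln1Dx _ (x^-1 - 1) ltac:(lra).
rewrite addrC subrK lnV ?posrE // in h.
have : x^-1 <= 1/2.
  rewrite -(ler_pM2l x0) mulfV ?gt_eqF //; lra.
lra.
Qed.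

Lemma card_bound (S A B K H : nat) : (2 <= S)%N -> (2 <= A)%N -> (2 <= B)%N -> (2 <= K * H)%N ->
  (K * H * S * A * B * K * 2 * K.+1 <= (S * A * B * (K * H)) ^ 3)%N.
Proof.
move=> hS hA hB hT.
have H1 : (1 <= H)%N by case: H hT => [|H'] //; rewrite muln0.
have K1 : (1 <= K)%N by case: K hT.
have hK : (K <= K * H)%N by rewrite leq_pmulr.
have X8 : (8 <= S * A * B)%N.
  by rewrite (_ : 8 = 2 * 2 * 2)%N // !leq_mul.
set X := (S * A * B)%N in X8 *; set T := (K * H)%N in hK hT *.
have -> : (T * S * A * B * K * 2 * K.+1 = X * T * (2 * K * K.+1))%N.
  by rewrite /X /T; ring.
have h1 : (2 * K * K.+1 <= 4 * T * T)%N by nia.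
have h2 : (4 <= X * X)%N by nia.
rewrite expnS expnS expn1 leq_mul2l; apply/orP; right.
apply: (leq_trans h1).
have -> : (X * T * (X * T) = (X * X) * (T * T))%N by ring.
rewrite -mulnA leq_mul2r; apply/orP; right; exact: h2.
Qed.

Lemma lam_le Cg Cf j : 0 < Cg -> 0 < Cf -> lam Cg Cf j * (4 * Cg * Cf) <= 1.
Proof.
move=> Cg0 Cf0.
have lm := lam_mul Cg Cf j Cg0 Cf0.
have l0 := lam_gt0 Cg Cf j Cg0 Cf0.
have c0 : 0 < 4 * Cg * Cf by rewrite !mulr_gt0.
have t1 : (1 : RR) <= 2 ^+ j by rewrite exprn_ege1 //; lra.
have : lam Cg Cf j * (4 * Cg * Cf) <= lam Cg Cf j * (4 * Cg * Cf * 2 ^+ j).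
  apply: ler_wpM2l; first exact: ltW.
  set t := (2:RR) ^+ j in t1 *; set c := 4 * Cg * Cf in c0 *; nra.
by rewrite lm.
Qed.

Lemma sqrt_le_of (x y : RR) : 0 <= y -> x <= y ^+ 2 -> Num.sqrt x <= y.
Proof.
move=> y0 h; apply: (le_trans (ler_wsqrtr h)).
by rewrite sqrtr_sqr ger0_norm.
Qed.
Theorem mainTheorem2 :
  exists C : RR, 0 < C /\
  forall (K H : nat) (St Ac Bc : finType),
    (2 <= #|St|)%N -> (2 <= #|Ac|)%N -> (2 <= #|Bc|)%N -> (2 <= K * H)%N ->
  forall (P : 'I_H -> St -> Ac -> Bc -> St -> RR),
    (forall h s a b s', 0 <= P h s a b s') ->
    (forall h s a b, \sum_(s' : St) P h s a b s' = 1) ->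
  forall (p : traj K H St Ac Bc -> RR),
    (forall w, 0 <= p w) ->
    \sum_(w : traj K H St Ac Bc) p w = 1 ->
    (* Markov property: Pr(s_{h+1}^k = s' | F_{k,h}) = P_h(s' | s_h^k, a_h^k, b_h^k) *)
    (forall (k : 'I_K) (h : 'I_H) (w : traj K H St Ac Bc) (s' : St),
       \sum_(w' | agreeF k h w w' && (nxt w' k h == s')) p w'
       = P h (st_at w k h) (a_at w k h) (b_at w k h) s'
         * \sum_(w' | agreeF k h w w') p w') ->
  forall (Cf Cg : RR), 0 < Cf -> 0 < Cg ->
  forall (F : 'I_K -> 'I_H -> traj K H St Ac Bc -> St -> RR)
         (G : 'I_K -> 'I_H -> St -> Ac -> Bc -> nat -> traj K H St Ac Bc -> RR),
    (* F_{h+1}^k and G_h^k(s,a,b,N) are F_{k,h}-measurable *)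
    (forall k h w w' s', agreeF k h w w' -> F k h w s' = F k h w' s') ->
    (forall k h s a b N w w', agreeF k h w w' -> G k h s a b N w = G k h s a b N w') ->
    (forall k h w s', `|F k h w s'| <= Cf) ->
    (forall k h s a b N w, (1 <= N <= K)%N -> 0 <= G k h s a b N w <= Cg) ->
    (forall k h s a b N w, (1 <= N <= K)%N ->
       0 <= Gsum G w k h s a b N <= 2) ->
  forall delta : RR, 0 < delta < 1 ->
    1 - delta <= \sum_(w | good P F G C Cf Cg delta w) p w.
Proof.
exists 48; split; first lra.
move=> K H St Ac Bc hS hA hB hT P P0 P1 p p0 psum markov Cf Cg Cf0 Cg0 F G
  Fmeas Gmeas Fb Gb Gs delta /andP [d0 d1].
pose I := ('I_K * 'I_H * St * Ac * Bc * 'I_K * bool * 'I_K.+1)%type.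
pose n := #|{: I}|.
have nE : n = (K * H * #|St| * #|Ac| * #|Bc| * K * 2 * K.+1)%N.
  by rewrite /n !card_prod !card_ord card_bool.
pose SABT := (#|St| * #|Ac| * #|Bc| * (K * H))%N.
pose L := ln (SABT%:R / delta).
pose ell := ln (n%:R / delta).
have K1 : (1 <= K)%N by case: (K) hT.
have nle : (n <= SABT ^ 3)%N by rewrite nE; exact: card_bound.
have n16 : (16 <= n)%N.
  rewrite nE; have H1 : (1 <= H)%N by case: (H) hT => [|H'] //; rewrite muln0.
  nia.
have SABT16 : (16 <= SABT)%N by rewrite /SABT; nia.
have n0 : (0 : RR) < n%:R by rewrite ltr0n; apply: leq_trans n16.
have SABT0 : (0 : RR) < SABT%:R by rewrite ltr0n; apply: leq_trans SABT16.
have ndpos : 0 < n%:R / delta by rewrite divr_gt0.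
have sdpos : 0 < SABT%:R / delta by rewrite divr_gt0.
have ge2 : forall m : nat, (16 <= m)%N -> 2 <= m%:R / delta.
  move=> m hm; have m16 : ((16%:R : RR) <= m%:R) by rewrite ler_nat.
  rewrite ler_pdivlMr //; nra.
have hL : 1/2 <= L by apply: ln_half; apply: ge2.
have hell2 : 1/2 <= ell by apply: ln_half; apply: ge2.
have hell : ell <= 3 * L.
  have : n%:R / delta <= (SABT%:R / delta) ^+ 3.
    have d3 : delta ^+ 3 <= delta.
      have dd : delta * delta <= 1 by nra.
      rewrite !exprS expr0 mulr1; nra.
    have nl : (n%:R : RR) <= SABT%:R ^+ 3 by rewrite -natrX ler_nat.
    rewrite expr_div_n ler_pdivlMr ?exprn_gt0 //.
    rewrite exprS mulrA divfK ?gt_eqF //.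
    apply: le_trans nl; rewrite -[X in _ <= X]mulr1 ler_wpM2l ?ltW //.
    by rewrite expr2; nra.
  move=> hh; rewrite -(@ler_ln _ (n%:R / delta)) ?posrE ?exprn_gt0 // in hh.
  rewrite lnXn // in hh.
  by rewrite -/ell -/L -mulr_natl in hh.
pose sgn (bb : bool) : RR := if bb then 1 else -1.
pose bad (ix : I) (w : traj K H St Ac Bc) : bool :=
  let: (k, h, s, a, b, N', sg, j) := ix in
  ell < \sum_(i : 'I_K | (i < k.+1)%N) Y P F G h s a b N'.+1 (lam Cg Cf j) (sgn sg) i w.
have expell : expR (- ell) = delta / n%:R.
  by rewrite exp.expRN lnK ?posrE // invf_div.
have hbad : forall ix, \sum_w p w * (bad ix w)%:R <= delta / n%:R.
  case=> [[[[[[[k h] s] a] b] N'] sg] j].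
  have hN : (1 <= N'.+1 <= K)%N by rewrite /= ltn_ord.
  have l0 : 0 <= lam Cg Cf j by apply: ltW; apply: lam_gt0.
  have hl := lam_le Cg Cf j Cg0 Cf0.
  have hsig : sgn sg = 1 \/ sgn sg = -1 by case: (sg); [left|right].
  have S := super P0 P1 p0 psum markov Fmeas Gmeas Fb Gb h s a b hN l0 hl hsig k.+1.
  rewrite /bad.
  set Z := fun w => \sum_(i : 'I_K | (i < k.+1)%N) Y P F G h s a b N'.+1 (lam Cg Cf j) (sgn sg) i w.
  apply: (@le_trans _ _ (\sum_w p w * expR (Z w) * (delta / n%:R))).
    apply: ler_sum => w _; rewrite -mulrA; apply: ler_wpM2l => //.
    rewrite -expell -exp.expRD.
    case: ltP => hz /=; last by rewrite mulr0n expR_ge0.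
    rewrite mulr1n; have hz2 : 0 <= Z w - ell by rewrite subr_ge0; apply: ltW.
    have := expR_ge1Dx (Z w + - ell); lra.
  rewrite -mulr_suml; rewrite -[X in _ <= X]mul1r; apply: ler_wpM2r => //.
  by rewrite divr_ge0 // ltW.
have det : forall w, (forall ix, ~~ bad ix w) -> good P F G 48 Cf Cg delta w.
  move=> w nb; rewrite /good /=.
  apply/forallP => k; apply/forallP => h; apply/forallP => s; apply/forallP => a.
  apply/forallP => b; apply/forallP => N'.
  rewrite -/SABT -/L.
  have hN : (1 <= N'.+1 <= K)%N by rewrite /= ltn_ord.
  set X := Xsum P F G w k h s a b N'.+1.
  have U0 := GV_ge0 P0 P1 F Gb h s a b hN k w.
  have Ule := GV_le P0 P1 Cg0 Fb Gb h s a b hN k w.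
  have Wle := Wsum_le P0 P1 F Gb h s a b hN k w.
  set U := GVarsum P F G w k h s a b N'.+1 in U0 Ule Wle *.
  set q := 2 * Cg * U.
  have q0 : 0 <= q by rewrite /q !mulr_ge0 // ltW.
  have qle : q <= 2 * K%:R * Cg ^+ 2 * Cf ^+ 2.
    rewrite /q (_ : 2 * K%:R * Cg ^+ 2 * Cf ^+ 2 = 2 * Cg * (K%:R * Cg * Cf ^+ 2)); last by ring.
    by apply: ler_wpM2l => //; rewrite mulr_ge0 // ltW.
  have key : forall sg, sgn sg * X <= 8 * ell * Cg * Cf + Num.sqrt (10 * ell * q).
    move=> sg; apply: (det_bound Cg Cf ell (sgn sg * X) q K Cg0 Cf0 q0 qle) => //; first lra.
    move=> jj hjj.
    have := nb (k, h, s, a, b, N', sg, Ordinal (hjj : (jj < K.+1)%N)).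
    rewrite /bad -leNgt Ysum => hz.
    have lp := lam_gt0 Cg Cf jj Cg0 Cf0.
    set l := lam Cg Cf jj in lp hz *.
    rewrite -(ler_pM2l lp) mulrDr [l * (ell / l)]mulrCA mulfV ?gt_eqF // mulr1.
    have : 2 * l ^+ 2 * \sum_(i : 'I_K | (i <= k)%N) Wt P F G h s a b N'.+1 i w
       <= 2 * l ^+ 2 * (Cg * U).
      by apply: ler_wpM2l => //; rewrite mulr_ge0 // sqr_ge0.
    rewrite /q; set V := \sum_(i : 'I_K | (i <= k)%N) _ in hz *.
    rewrite -/X expr2 in hz * => hh; lra.
  have k1 := key true; have k2 := key false; rewrite /sgn in k1 k2.
  apply: (@le_trans _ _ (8 * ell * Cg * Cf + Num.sqrt (10 * ell * q))).
    by apply/ler_normlP; split; lra.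
  set R := Num.sqrt (Cg * L ^+ 2) * Num.sqrt U.
  have R0 : 0 <= R by rewrite mulr_ge0 // sqrtr_ge0.
  have R2 : R ^+ 2 = Cg * L ^+ 2 * U.
    rewrite /R exprMn !sqr_sqrtr //; apply: mulr_ge0; [exact: ltW | exact: sqr_ge0].
  have CU0 : 0 <= Cg * U by rewrite mulr_ge0 // ltW.
  have s1 : Num.sqrt (10 * ell * q) <= 48 * R.
    apply: sqrt_le_of; first by rewrite mulr_ge0.
    rewrite exprMn R2 /q.
    have hl2 : 20 * ell <= 2304 * L ^+ 2 by rewrite expr2; nra.
    have := ler_wpM2r CU0 hl2.
    rewrite (_ : 10 * ell * (2 * Cg * U) = 20 * ell * (Cg * U)); last by ring.
    rewrite (_ : 48 ^+ 2 * (Cg * L ^+ 2 * U) = 2304 * L ^+ 2 * (Cg * U)) //.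
    by rewrite expr2; ring.
  have CC0 : 0 <= Cg * Cf by rewrite mulr_ge0 // ltW.
  have hl3 : 8 * ell <= 48 * L ^+ 2 by rewrite expr2; nra.
  have s2 := ler_wpM2r CC0 hl3.
  have s3 : 0 <= Num.sqrt (Cg / (N'.+1)%:R) * Cf * L ^+ 2.
    by apply: mulr_ge0; [apply: mulr_ge0; [exact: sqrtr_ge0 | exact: ltW] | exact: sqr_ge0].
  set s4 := Num.sqrt (Cg / (N'.+1)%:R) in s3 *.
  rewrite mulrDr mulrDl mulrDl.
  lra.
have hunion : \sum_(w | ~~ good P F G 48 Cf Cg delta w) p w <= delta.
  apply: (@le_trans _ _ (\sum_w \sum_(ix : I) p w * (bad ix w)%:R)).
    rewrite big_mkcond /=; apply: ler_sum => w _.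
    case: ifP => hg; last by apply: sumr_ge0 => ix _; rewrite mulr_ge0.
    case: (boolP [exists ix, bad ix w]) => [/existsP [ix bx] | /existsPn nb]; last first.
      by rewrite (det w nb) in hg.
    rewrite (bigD1 ix) //= bx mulr1 lerDl; apply: sumr_ge0 => ix' _; rewrite mulr_ge0 //.
  rewrite exchange_big /=.
  apply: (@le_trans _ _ (\sum_(ix : I) delta / n%:R)); first by apply: ler_sum => ix _; apply: hbad.
  rewrite sumr_const (_ : #|xpredT| = n) // -[_ *+ n]mulr_natr divfK ?gt_eqF //.
rewrite (bigID (good P F G 48 Cf Cg delta)) /= in psum.
lra.
Qed.
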